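(* Let $V$ be a complex Banach space, $H$ a commutative monoid generated by $\varpi_1,\dots,\varpi_n$, and $h\mapsto T_h$ a monoid homomorphism into the bounded operators on $V$ with $T_e=\mathrm{id}_V$; put $T_j=T_{\varpi_j}$. Let $\chi$ be a character of $\mathbb C[X_1,\dots,X_n]$, $\lambda_i=\chi(X_i)$, and suppose there is $h\in H^\circ$ with a representation $h=\sum_i\ell_i\varpi_i$ ($\ell_i\in\mathbb N_0$) such that $|\prod_i\lambda_i^{\ell_i}|>r_{\mathrm{ess}}(T_h)$. Then $\chi$ is a Fredholm character, i.e. $\dim_{\mathbb C}\mathrm{Tor}_i^{\mathbb C[X]}(\mathbb C_\chi,V_T)<\infty$ for all $i$ and $=0$ for all but finitely many $i$.
   Context: $H^\circ=\{h\in H:T_h$ quasi-compact$\}$; $T$ is quasi-compact if $r_{\mathrm{ess}}(T)<r(T)$ (spectral radius), where $r_{\mathrm{ess}}(T)=\inf\{r>0:\lambda-T$ Fredholm of index zero for all $|\lambda|\ge r\}$. $V_T$ is $V$ as a $\mathbb C[X]$-module with $X_j$ acting by $T_j$; $\mathrm{Tor}_p^{\mathbb C[X]}(\mathbb C_\chi,V_T)$ is the $p$-th homology of the Koszul complex $\Lambda^p\mathbb C^n\otimes V\to\Lambda^{p-1}\mathbb C^n\otimes V$, $e_{i_1}\wedge\dots\wedge e_{i_p}\otimes x\mapsto\sum_k(-1)^ke_{i_1}\wedge\cdots\widehat{e_{i_k}}\cdots\wedge e_{i_p}\otimes(T_{i_k}-\lambda_{i_k})x$. *)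

(* Defs.v *)
From HB Require Import structures.
From mathcomp Require Import all_boot all_order all_algebra.
From mathcomp Require Export mpoly.
From mathcomp Require Import all_classical all_reals all_analysis.
From mathcomp Require Export complex.
From mathcomp Require Export all_boot all_order all_algebra all_classical all_reals all_analysis.

Set Implicit Arguments.
Unset Strict Implicit.
Unset Printing Implicit Defensive.

Import Order.TTheory GRing.Theory Num.Theory.
Import numFieldNormedType.Exports.
Local Open Scope ring_scope.
Local Open Scope classical_set_scope.

Definition cmod (R : realType) (z : R[i]) : R := complex.Re `|z|.

(* [fin_span_mod U B m]: there are m vectors w_1..w_m such that every   *)
(* u in U lies in B + span(w_1..w_m).  With B = {0} (resp. U = W) this  *)
(* says dim U <= m (resp. codim B <= m).                                *)
Definition fin_span_mod (K : pzRingType) (W : lmodType K)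
  (U B : set W) (m : nat) : Prop :=
  exists w : 'I_m -> W, forall u, U u ->
    exists (c : 'I_m -> K) (b : W), B b /\ u = b + \sum_(i < m) c i *: w i.

(* dim (U + B)/B = m (U, B subsets; used with B a subspace of U). *)
Definition has_dim_mod (K : pzRingType) (W : lmodType K)
  (U B : set W) (m : nat) : Prop :=
  fin_span_mod U B m /\ forall k, (k < m)%N -> ~ fin_span_mod U B k.

Definition fin_dim_mod (K : pzRingType) (W : lmodType K) (U B : set W) : Prop :=
  exists m, fin_span_mod U B m.

Definition bounded_op (R : realType) (V : completeNormedModType R[i])
  (A : V -> V) : Prop := linear A /\ continuous A.

Definition kerS (R : realType) (V : completeNormedModType R[i]) (A : V -> V)
  : set V := [set x | A x = 0].

Definition rangeS (R : realType) (V : completeNormedModType R[i]) (A : V -> V)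
  : set V := [set A x | x in setT].

Definition fredholm_index0 (R : realType) (V : completeNormedModType R[i])
  (A : V -> V) : Prop :=
  exists m, has_dim_mod (kerS A) [set 0] m /\ has_dim_mod setT (rangeS A) m.

Definition bop_invertible (R : realType) (V : completeNormedModType R[i])
  (A : V -> V) : Prop :=
  exists S : V -> V, bounded_op S /\ (forall x, S (A x) = x) /\ (forall x, A (S x) = x).

Definition spectrum (R : realType) (V : completeNormedModType R[i])
  (A : V -> V) : set R[i] :=
  [set z | ~ bop_invertible (fun x => z *: x - A x)].

Definition spec_radius (R : realType) (V : completeNormedModType R[i])
  (A : V -> V) : \bar R :=
  ereal_sup [set (cmod z)%:E | z in spectrum A].

Definition ess_spec_radius (R : realType) (V : completeNormedModType R[i])
  (A : V -> V) : \bar R :=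
  ereal_inf [set r%:E | r in [set r : R | 0 < r /\
     forall z : R[i], r <= cmod z -> fredholm_index0 (fun x => z *: x - A x)]].

Definition quasi_compact (R : realType) (V : completeNormedModType R[i])
  (A : V -> V) : Prop := (ess_spec_radius A < spec_radius A)%E.

(* Lambda^p C^n (x) V is identified with the V-valued functions on the  *)
(* p-element subsets of {0..n-1} (x S = coefficient of e_S).            *)
Definition koszul_chains (R : realType) (V : completeNormedModType R[i])
  (n p : nat) : set ({set 'I_n} -> V) :=
  [set x | forall S : {set 'I_n}, #|S| != p -> x S = 0].

(* d(e_{i_1}/\.../\e_{i_p} (x) x)
     = sum_k (-1)^k e_{i_1}/\..^(i_k)../\e_{i_p} (x) (T_{i_k} - lambda_{i_k}) x,
   with i_1 < ... < i_p and k counted from 1. *)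
Definition koszul_d (R : realType) (V : completeNormedModType R[i]) (n : nat)
  (Tj : 'I_n -> V -> V) (lam : 'I_n -> R[i])
  (x : {set 'I_n} -> V) : {set 'I_n} -> V :=
  fun S => \sum_(k < n | k \notin S)
     ((-1) ^+ (#|[set j in S | (val j < val k)%N]|.+1)) *:
       (Tj k (x (k |: S)) - lam k *: x (k |: S)).

Definition koszul_cycles (R : realType) (V : completeNormedModType R[i]) (n : nat)
  (Tj : 'I_n -> V -> V) (lam : 'I_n -> R[i]) (p : nat) : set ({set 'I_n} -> V) :=
  [set x | @koszul_chains R V n p x /\ koszul_d Tj lam x = (fun=> 0)].

Definition koszul_boundaries (R : realType) (V : completeNormedModType R[i]) (n : nat)
  (Tj : 'I_n -> V -> V) (lam : 'I_n -> R[i]) (p : nat) : set ({set 'I_n} -> V) :=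
  [set koszul_d Tj lam y | y in @koszul_chains R V n p.+1].

(* chi (with lambda_i = chi(X_i)) is a Fredholm character: every
   Tor_p = H_p(Koszul) is finite-dimensional, and zero for p large. *)
Definition fredholm_character (R : realType) (V : completeNormedModType R[i])
  (n : nat) (Tj : 'I_n -> V -> V) (lam : 'I_n -> R[i]) : Prop :=
  (forall p, fin_dim_mod (koszul_cycles Tj lam p) (koszul_boundaries Tj lam p)) /\
  (exists N, forall p, (N <= p)%N ->
     koszul_cycles Tj lam p `<=` koszul_boundaries Tj lam p).

(* Main.v *)
Require Import Defs.
From Stdlib Require Import Classical Lia.
From mathcomp Require Import zify.
Import Order.TTheory GRing.Theory Num.Theory.
Import numFieldNormedType.Exports.
Local Open Scope ring_scope.
Local Open Scope classical_set_scope.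
Set Implicit Arguments.
Unset Strict Implicit.

Section LinAlg.
Variables (K : fieldType).

Definition lin {W W2 : lmodType K} (f : W -> W2) :=
  forall a u v, f (a *: u + v) = a *: f u + f v.

Section Lin.
Variables (W W2 : lmodType K) (f : W -> W2) (fl : lin f).
Lemma lin0 : f 0 = 0.
Proof.
by have := fl (-1) 0 0; rewrite scaler0 addr0 scaleN1r addNr.
Qed.
Lemma linD u v : f (u + v) = f u + f v.
Proof. by have := fl 1 u v; rewrite !scale1r. Qed.
Lemma linZ a u : f (a *: u) = a *: f u.
Proof. by have := fl a u 0; rewrite !addr0 lin0 addr0. Qed.
Lemma linN u : f (- u) = - f u.
Proof. by rewrite -scaleN1r linZ scaleN1r. Qed.
Lemma linB u v : f (u - v) = f u - f v.
Proof. by rewrite linD linN. Qed.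
Lemma lin_sum I (r : seq I) (P : pred I) (F : I -> W) :
  f (\sum_(i <- r | P i) F i) = \sum_(i <- r | P i) f (F i).
Proof.
elim/big_rec2: _ => [|i y1 y2 _ <-]; first exact: lin0.
by rewrite linD.
Qed.
End Lin.
Arguments lin0 {W W2 f}.
Arguments linD {W W2 f}.
Arguments linZ {W W2 f}.
Arguments linN {W W2 f}.
Arguments linB {W W2 f}.
Arguments lin_sum {W W2 f}.

Section Spl.
Variable (W : lmodType K).

Fixpoint spl (s : seq W) (v : W) : Prop :=
  match s with [::] => v = 0 | x :: s' => exists a : K, spl s' (v - a *: x) end.

Lemma spl0 s : spl s 0.
Proof. elim: s => [|x s IH] //=; exists 0; by rewrite scale0r subr0. Qed.

Lemma splD s u v : spl s u -> spl s v -> spl s (u + v).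
Proof.
elim: s u v => [|x s IH] u v /=; first by move=> -> ->; rewrite addr0.
move=> [a Ha] [b Hb]; exists (a + b); have := IH _ _ Ha Hb.
by rewrite scalerDl opprD addrACA.
Qed.

Lemma splZ s c v : spl s v -> spl s (c *: v).
Proof.
elim: s v => [|x s IH] v /=; first by move=> ->; rewrite scaler0.
by move=> [a Ha]; exists (c * a); have := IH _ Ha; rewrite scalerBr scalerA.
Qed.

Lemma splN s v : spl s v -> spl s (- v).
Proof. by move=> /(@splZ _ (-1)); rewrite scaleN1r. Qed.

Lemma splB s u v : spl s u -> spl s v -> spl s (u - v).
Proof. by move=> Hu /splN; apply: splD. Qed.

Lemma spl_cat s1 s2 u v : spl s1 u -> spl s2 v -> spl (s1 ++ s2) (u + v).
Proof.
elim: s1 u => [|x s1 IH] u /=; first by move=> -> ; rewrite add0r.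
move=> [a Ha] Hv; exists a; have := IH _ Ha Hv.
by rewrite addrAC.
Qed.

Lemma spl_flatten I (r : seq I) (g : I -> seq W) (h : I -> W) :
  (forall i, spl (g i) (h i)) -> spl (flatten (map g r)) (\sum_(i <- r) h i).
Proof.
move=> H; elim: r => [|i r IH] /=; first by rewrite big_nil.
by rewrite big_cons; apply: spl_cat.
Qed.

Lemma spl_sum I (r : seq I) (w : I -> W) (c : I -> K) :
  spl (map w r) (\sum_(i <- r) c i *: w i).
Proof.
elim: r => [|i r IH] /=; first by rewrite big_nil.
by exists (c i); rewrite big_cons addrAC subrr add0r.
Qed.

Lemma spl_nth s v : spl s v ->
  exists c : nat -> K, v = \sum_(i < size s) c i *: s`_i.
Proof.
elim: s v => [|x s IH] v /=; first by move=> ->; exists (fun=> 0); rewrite big_ord0.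
move=> [a /IH [c Hc]]; exists (fun k => if k is k'.+1 then c k' else a).
rewrite big_ord_recl /= -Hc.
by rewrite addrC subrK.
Qed.

Lemma preim_fin (F : W -> W) (Fl : lin F) (v : seq W) :
  exists r : seq W, forall x, spl v (F x) -> exists k, F k = 0 /\ spl r (x - k).
Proof.
elim: v => [|v0 v [r IH]].
  exists [::] => x /= Fx; exists x; split => //; by rewrite subrr.
case: (classic (exists x0, spl v (F x0 - v0))) => [[x0 Hx0]|Hno].
  exists (x0 :: r) => x /= [a Ha].
  have : spl v (F (x - a *: x0)).
    have -> : F (x - a *: x0) = (F x - a *: v0) - a *: (F x0 - v0).
      by rewrite (linB Fl) (linZ Fl) scalerBr opprB addrA subrK.
    by apply: splB => //; apply: splZ.
  move=> /IH [k [Fk Hk]]; exists k; split => //; exists a.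
  by rewrite addrAC.
exists r => x /= [a Ha].
case: (eqVneq a 0) => [a0|an0].
  by apply: IH; move: Ha; rewrite a0 scale0r subr0.
exfalso; apply: Hno; exists (a^-1 *: x).
have -> : F (a^-1 *: x) - v0 = a^-1 *: (F x - a *: v0).
  by rewrite (linZ Fl) scalerBr scalerA mulVf // scale1r.
exact: splZ.
Qed.

End Spl.
Arguments spl {W}.
Lemma spl_map (W W2 : lmodType K) (g : W -> W2) (gl : lin g) (s : seq W) v :
  spl s v -> spl (map g s) (g v).
Proof.
elim: s v => [|x s IH] v /=; first by move=> ->; rewrite (lin0 gl).
by move=> [a /IH Ha]; exists a; rewrite -(linZ gl) -(linB gl).
Qed.

End LinAlg.
Arguments spl {K W}.
Arguments lin {K W W2}.
Arguments lin0 {K W W2 f}.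
Arguments linD {K W W2 f}.
Arguments linZ {K W W2 f}.
Arguments linN {K W W2 f}.
Arguments linB {K W W2 f}.
Arguments lin_sum {K W W2 f}.



Section Koszul.
Variables (R : realType) (V : completeNormedModType R[i]) (n : nat)
  (Tj : 'I_n -> V -> V) (lam : 'I_n -> R[i]) (Tl : forall k, lin (Tj k)).

Local Notation W := ({set 'I_n} -> V).
Definition Aop k (v : V) := Tj k v - lam k *: v.
Definition cnt (S : {set 'I_n}) (k : 'I_n) := #|[set j in S | (val j < val k)%N]|.
Local Notation d := (koszul_d Tj lam).

Lemma dE (x : W) S : d x S = \sum_(k < n | k \notin S) (-1) ^+ (cnt S k).+1 *: Aop k (x (k |: S)).
Proof. by []. Qed.

Lemma fctD (x y : W) S : (x + y) S = x S + y S. Proof. by []. Qed.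
Lemma fctZ a (x : W) S : (a *: x) S = a *: x S. Proof. by []. Qed.
Lemma fctN (x : W) S : (- x) S = - x S. Proof. by []. Qed.
Lemma fct0 S : (0 : W) S = 0. Proof. by []. Qed.
Lemma fctB (x y : W) S : (x - y) S = x S - y S. Proof. by []. Qed.
Lemma fct_sum I (r : seq I) (P : pred I) (F : I -> W) S :
  (\sum_(i <- r | P i) F i) S = \sum_(i <- r | P i) F i S.
Proof. by elim/big_rec2: _ => // i y1 y2 _ <-. Qed.

Lemma Alin k : lin (Aop k).
Proof.
move=> a u v; rewrite /Aop (Tl k) scalerDr !scalerA mulrC -!scalerA.
by rewrite scalerBr opprD addrACA.
Qed.

Lemma dlin : lin d.
Proof.
move=> a x y; apply: funext => S; rewrite fctD fctZ !dE scaler_sumr -big_split.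
apply: eq_bigr => k _; rewrite fctD fctZ (Alin k) scalerDr !scalerA.
by rewrite mulrC.
Qed.

Lemma cntU1 (S : {set 'I_n}) (i k : 'I_n) : i \notin S -> cnt (i |: S) k = (cnt S k + (val i < val k))%N.
Proof.
move=> iS; rewrite /cnt.
case: (ltnP (val i) (val k)) => ik.
  have -> : [set j in i |: S | (val j < val k)%N] = i |: [set j in S | (val j < val k)%N].
    apply/setP => j; rewrite !inE; case: (eqVneq j i) => [->|] //=.
  by rewrite cardsU1 inE (negbTE iS) /= addnC.
have -> : [set j in i |: S | (val j < val k)%N] = [set j in S | (val j < val k)%N].
  apply/setP => j; rewrite !inE; case: (eqVneq j i) => [->|] //=.
  by rewrite (negbTE iS) ltnNge ik.
by rewrite addn0.
Qed.

Definition sop i (z : W) : W := fun S =>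
  if i \in S then (-1) ^+ (cnt S i).+1 *: z (S :\ i) else 0.

Lemma sign_sq (a : nat) : (-1) ^+ a * (-1) ^+ a = 1 :> R[i].
Proof. by rewrite -exprD addnn -mul2n exprM sqrrN !expr1n. Qed.

Lemma sign_eq (a b : nat) : (a = b + 2)%N -> (-1) ^+ a = (-1) ^+ b :> R[i].
Proof. by move=> ->; rewrite exprD sqrrN expr1n mulr1. Qed.

Lemma homotopy (i : 'I_n) (z : W) : d z = (fun=> 0) -> d (sop i z) = (fun S => Aop i (z S)).
Proof.
move=> dz0; apply: funext => S; rewrite dE.
case: (boolP (i \in S)) => iS.
  set S' := S :\ i.
  have iS' : i \notin S' by rewrite !inE eqxx.
  have SE : S = i |: S' by rewrite finset.setD1K.
  have := congr1 (fun f => f S') dz0; rewrite dE /= (bigD1 i) //= -SE.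
  move=> /eqP; rewrite addr_eq0 => /eqP Hs.
  have -> : \sum_(k < n | k \notin S) (-1) ^+ (cnt S k).+1 *: Aop k (sop i z (k |: S))
     = (-1) ^+ (cnt S' i) *: \sum_(k < n | (k \notin S') && (k != i))
          (-1) ^+ (cnt S' k).+1 *: Aop k (z (k |: S')).
    rewrite scaler_sumr; apply: eq_big => [k|k kS].
      rewrite SE !inE; by case: (k == i); rewrite ?andbF ?andbT.
    have ki : k != i by apply: contraNneq kS => ->.
    have kS' : k \notin S' by move: kS; rewrite SE !inE negb_or => /andP[].
    rewrite /sop in_setU1 iS orbT.
    have -> : (k |: S) :\ i = k |: S'.
      apply/setP => j; rewrite !inE; case: (eqVneq j k) => [->|] //=.
      by rewrite ki.
    rewrite (linZ (Alin k)) !scalerA.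
    have c1 : cnt S k = (cnt S' k + (val i < val k))%N by rewrite SE cntU1.
    have c2 : cnt (k |: S) i = (cnt S' i + (val k < val i))%N.
      by rewrite cntU1 // {1}SE cntU1 // ltnn addn0.
    have e12 : ((val i < val k) + (val k < val i) = 1)%N.
      have : val k != val i by [].
      by case: ltngtP.
    suff -> : (-1) ^+ (cnt S k).+1 * (-1) ^+ (cnt (k |: S) i).+1 =
       (-1) ^+ cnt S' i * (-1) ^+ (cnt S' k).+1 :> R[i] by [].
    rewrite c1 c2 -!exprD; apply: sign_eq.
    move: e12; case: (val i < val k)%N; case: (val k < val i)%N => //= _; lia.
  have Hs' := congr1 (fun v => - v) Hs; rewrite /= opprK in Hs'.
  rewrite -Hs' scalerN scalerA exprS mulrCA sign_sq mulr1 scaleN1r opprK //.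
rewrite (bigD1 i) //= big1 ?addr0.
  rewrite /sop in_setU1 eqxx /= finset.setU1K // cntU1 // ltnn addn0.
  by rewrite (linZ (Alin i)) scalerA sign_sq scale1r.
move=> k /andP[kS ki]; rewrite /sop in_setU1 (negbTE iS) orbF eq_sym (negbTE ki).
by rewrite (lin0 (Alin k)) scaler0.
Qed.

Definition comp (g : V -> V) (x : W) : W := fun S => g (x S).
Definition delta (S : {set 'I_n}) (v : V) : W := fun T => if T == S then v else 0.
Definition mask (p : nat) (x : W) : W := fun S => if #|S| == p then x S else 0.
Local Notation chains := (@koszul_chains R V n).
Local Notation cyc := (koszul_cycles Tj lam).
Local Notation bnd := (koszul_boundaries Tj lam).

Lemma comp_lin g : lin g -> lin (comp g).
Proof. by move=> gl a x y; apply: funext => S; rewrite /comp fctD fctZ gl. Qed.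

Lemma delta_lin S : lin (delta S).
Proof.
move=> a u v; apply: funext => T; rewrite fctD fctZ /delta.
by case: (T == S); rewrite ?scaler0 ?addr0.
Qed.

Lemma mask_lin p : lin (mask p).
Proof.
move=> a u v; apply: funext => T; rewrite fctD fctZ /mask.
by case: (#|T| == p); rewrite ?scaler0 ?addr0.
Qed.

Lemma dmask_lin p : lin (fun q => d (mask p q)).
Proof. by move=> a u v; rewrite (mask_lin p) dlin. Qed.

Lemma comp_d g : lin g -> (forall k v, g (Tj k v) = Tj k (g v)) ->
  forall x, comp g (d x) = d (comp g x).
Proof.
move=> gl gc x; apply: funext => S; rewrite /comp !dE (lin_sum gl).
apply: eq_bigr => k _; rewrite (linZ gl); congr (_ *: _).
by rewrite /Aop (linB gl) (linZ gl) gc.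
Qed.

Lemma comp_mask g : lin g -> forall p x, comp g (mask p x) = mask p (comp g x).
Proof.
move=> gl p x; apply: funext => S; rewrite /comp /mask.
by case: (#|S| == p); rewrite ?(lin0 gl).
Qed.

Lemma mask_chain p x : chains p x -> mask p x = x.
Proof.
move=> Hx; apply: funext => S; rewrite /mask; case: eqP => // /eqP hS.
by rewrite Hx.
Qed.

Lemma chain_mask p x : chains p (mask p x).
Proof. by move=> S hS; rewrite /mask (negbTE hS). Qed.

Lemma chainsD p x y : chains p x -> chains p y -> chains p (x + y).
Proof. by move=> Hx Hy S hS; rewrite fctD Hx ?Hy ?addr0. Qed.

Lemma chainsZ p a x : chains p x -> chains p (a *: x).
Proof. by move=> Hx S hS; rewrite fctZ Hx ?scaler0. Qed.

Lemma chains0 p : chains p 0.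
Proof. by []. Qed.

Lemma chains_comp g p x : lin g -> chains p x -> chains p (comp g x).
Proof. by move=> gl Hx S hS; rewrite /comp Hx ?(lin0 gl). Qed.

Lemma sop_chain p i z : chains p z -> chains p.+1 (sop i z).
Proof.
move=> Hz S hS; rewrite /sop; case: ifP => // iS.
rewrite Hz ?scaler0 //; apply: contra hS => /eqP h.
by rewrite (cardsD1 i S) iS h.
Qed.

Lemma bndD p a b : bnd p a -> bnd p b -> bnd p (a + b).
Proof.
move=> [x xc <-] [y yc <-]; exists (x + y); first exact: chainsD.
by rewrite (linD dlin).
Qed.

Lemma bndZ p c a : bnd p a -> bnd p (c *: a).
Proof.
move=> [x xc <-]; exists (c *: x); first exact: chainsZ.
by rewrite (linZ dlin).
Qed.

Lemma bnd0 p : bnd p 0.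
Proof. by exists 0; [exact: chains0 | rewrite (lin0 dlin)]. Qed.

Definition good p (g : V -> V) := forall z, cyc p z -> bnd p (comp g z).

Lemma good_A p k : good p (Aop k).
Proof.
move=> z [zc dz]; exists (sop k z); first exact: sop_chain.
by rewrite homotopy.
Qed.

Lemma good_ext p g1 g2 : g1 =1 g2 -> good p g1 -> good p g2.
Proof.
move=> e G z Hz; have -> : comp g2 z = comp g1 z.
  by apply: funext => S; rewrite /comp e.
exact: G.
Qed.

Lemma good_add p g1 g2 : good p g1 -> good p g2 -> good p (fun v => g1 v + g2 v).
Proof.
move=> G1 G2 z Hz; have -> : comp (fun v => g1 v + g2 v) z = comp g1 z + comp g2 z.
  by apply: funext.
exact: (bndD (G1 z Hz) (G2 z Hz)).
Qed.

Lemma good_scale p c g : good p g -> good p (fun v => c *: g v).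
Proof.
move=> G z Hz; have -> : comp (fun v => c *: g v) z = c *: comp g z.
  by apply: funext.
exact: (bndZ c (G z Hz)).
Qed.

Lemma good_comp p g h : lin h -> (forall k v, h (Tj k v) = Tj k (h v)) ->
  good p g -> good p (fun v => h (g v)).
Proof.
move=> hl hc G z Hz; have [y yc dy] := G z Hz.
exists (comp h y); first exact: chains_comp.
by rewrite -comp_d // dy.
Qed.

Lemma good0 p : good p (fun=> 0).
Proof.
move=> z _; have -> : comp (fun=> 0) z = 0 by apply: funext.
exact: bnd0.
Qed.

Lemma decomp (x : W) : x = \sum_(S : {set 'I_n}) delta S (x S).
Proof.
apply: funext => T; rewrite fct_sum (bigD1 T) //= big1 ?addr0 /delta ?eqxx //.
by move=> S; rewrite eq_sym => /negbTE ->.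
Qed.

Section Fin.
Variables (f : V -> V) (fl : lin f) (fc : forall k v, f (Tj k v) = Tj k (f v))
  (kl ql : seq V)
  (Hk : forall v, f v = 0 -> spl kl v)
  (Hq : forall v, exists u, spl ql (v - f u))
  (Hg : forall p, good p f).

Let NL := flatten (map (fun S => map (delta S) kl) (index_enum {set 'I_n})).
Let QL := flatten (map (fun S => map (delta S) ql) (index_enum {set 'I_n})).

Lemma Nspan (x : W) : comp f x = 0 -> spl NL x.
Proof.
move=> Hx; rewrite {1}(decomp x); apply: spl_flatten => S.
apply: (spl_map (delta_lin S)); apply: Hk.
exact: (congr1 (fun y => y S) Hx).
Qed.

Lemma Qspan (x : W) : exists y, spl QL (x - comp f y).
Proof.
have [u Hu] := choice (fun S => Hq (x S)).
exists u; rewrite (decomp (x - comp f u)); apply: spl_flatten => S.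
by apply: (spl_map (delta_lin S)); apply: Hu.
Qed.

Lemma fin_p p : fin_dim_mod (cyc p) (bnd p).
Proof.
pose D := map (fun q => d (mask p.+1 q)) QL.
have [r Hr] := preim_fin (comp_lin fl) D.
exists (size (NL ++ r)); exists (fun i => (NL ++ r)`_i) => z Hz.
have [y yc dy] := Hg Hz.
have [y' Hy'] := Qspan y.
pose y'' := mask p.+1 y'.
have H1 : spl D (comp f (z - d y'')).
  have -> : comp f (z - d y'') = d (mask p.+1 (y - comp f y')).
    rewrite (linB (comp_lin fl)) -dy comp_d // (linB (mask_lin _)) mask_chain //.
    by rewrite (linB dlin) comp_mask.
  exact: (spl_map (dmask_lin p.+1)).
have [k [fk Hk']] := Hr _ H1.
have := spl_cat (Nspan fk) Hk'.
rewrite addrC subrK => Hs.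
have [c Hc] := spl_nth Hs.
exists (fun i => c (val i)), (d y''); split.
  by exists y''; first exact: chain_mask.
by rewrite -Hc addrC subrK.
Qed.

Lemma vanish p : (n < p)%N -> cyc p `<=` bnd p.
Proof.
move=> np z [zc _]; have -> : z = 0.
  apply: funext => S; apply: zc; apply: contraTneq np => <-.
  by rewrite -leqNgt; apply: leq_trans (max_card _) _; rewrite card_ord.
exact: bnd0.
Qed.

End Fin.
End Koszul.


Section Mon.
Variables (R : realType) (V : completeNormedModType R[i])
  (H : nmodType) (n : nat) (varpi : 'I_n -> H) (T : H -> V -> V)
  (lam : 'I_n -> R[i]) (Tlin : forall h, lin (T h)) (HT0 : T 0 = id)
  (Hhom : forall a b : H, T (a + b) = T a \o T b).

Let Tj := fun j => T (varpi j).
Let Tl : forall k, lin (Tj k) := fun k => Tlin (varpi k).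

Lemma Tcomm a b v : T a (T b v) = T b (T a v).
Proof.
by have := congr1 (fun f => f v) (Hhom a b); rewrite addrC Hhom /= => ->.
Qed.

Lemma good_step p j h mu :
  good Tj lam p (fun v => T h v - mu *: v) ->
  good Tj lam p (fun v => T (varpi j + h) v - (lam j * mu) *: v).
Proof.
move=> G; apply: (@good_ext _ _ _ _ _ _ (fun v => Tj j (T h v - mu *: v) + mu *: Aop Tj lam j v)).
  move=> v /=; rewrite Hhom /= /Aop /Tj (linB (Tlin _)) (linZ (Tlin _)).
  rewrite scalerBr scalerA [mu * _]mulrC addrA subrK //.
apply: (good_add Tl).
  apply: (good_comp (Tl j)) => //.
  by move=> k v; rewrite /Tj Tcomm.
exact: (good_scale Tl mu (good_A Tl j)).
Qed.

Lemma good_mon p (l : 'I_n -> nat) (r : seq 'I_n) :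
  good Tj lam p (fun v => T (\sum_(j <- r) varpi j *+ l j) v - (\prod_(j <- r) lam j ^+ l j) *: v).
Proof.
elim: r => [|j r IH].
  apply: (good_ext (g1 := fun=> 0)); last exact: (good0 Tl).
  by move=> v; rewrite !big_nil HT0 scale1r subrr.
rewrite big_cons; under eq_fun do rewrite big_cons.
elim: (l j) => [|m IHm].
  by apply: (good_ext _ IH) => v; rewrite mulr0n add0r expr0 mul1r.
apply: (good_ext _ (good_step j IHm)) => v.
by rewrite mulrS exprS addrA mulrA.
Qed.
End Mon.

Lemma lin_sub (R : realType) (V : completeNormedModType R[i]) (g : V -> V) (mu : R[i]) :
  lin g -> lin (fun v => mu *: v - g v).
Proof.
move=> gl a u v /=; rewrite gl scalerDr scalerA mulrC -scalerA.
by rewrite scalerBr opprD addrACA.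
Qed.

Unset Implicit Arguments.
Set Strict Implicit.
Theorem mainTheorem12 (R : realType) (V : completeNormedModType R[i])
  (H : nmodType) (n : nat) (varpi : 'I_n -> H) (T : H -> V -> V)
  (chi : {rmorphism {mpoly R[i][n]} -> R[i]}) :
  (forall h : H, exists l : 'I_n -> nat, h = \sum_(j < n) varpi j *+ l j) ->
  (forall h : H, bounded_op (T h)) ->
  T 0 = id ->
  (forall a b : H, T (a + b) = T a \o T b) ->
  (exists h : H, quasi_compact (T h) /\
     exists l : 'I_n -> nat, h = \sum_(j < n) varpi j *+ l j /\
       (ess_spec_radius (T h) < (cmod (\prod_(j < n) chi 'X_j ^+ l j))%:E)%E) ->
  fredholm_character (fun j => T (varpi j)) (fun j => chi 'X_j).
Proof.
move=> _ Hb HT0 Hhom [h [_ [l [hl Hess]]]].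
set lam := fun j => chi 'X_j.
have Tlin : forall h, lin (T h) by move=> h'; exact: (Hb h').1.
have Tl : forall k, lin ((fun j => T (varpi j)) k) by move=> k; exact: Tlin.
set mu := \prod_(j < n) chi 'X_j ^+ l j in Hess.
pose f := fun v => mu *: v - T h v.
have fl : lin f by apply: lin_sub.
have fc : forall k v, f (T (varpi k) v) = T (varpi k) (f v).
  by move=> k v; rewrite /f (linB (Tlin _)) (linZ (Tlin _)) Tcomm.
have Hg : forall p, good (fun j => T (varpi j)) lam p f.
  move=> p; have G := @good_mon R V H n varpi T lam Tlin HT0 Hhom p l (index_enum 'I_n).
  apply: (good_ext _ (good_scale Tl (-1) G)) => v.
  by rewrite /f /mu hl scaleN1r opprB.
have [y [r [r0 Hr] <-] ylt] := ereal_inf_lt Hess.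
move: ylt; rewrite lte_fin => /ltW ylt.
have [m [[[w Hw] _] [[w' Hw'] _]]] := Hr mu ylt.
have Hk : forall v, f v = 0 -> spl (map w (index_enum 'I_m)) v.
  move=> v fv; have [c [b [b0 ->]]] := Hw v fv.
  by rewrite b0 add0r; apply: spl_sum.
have Hq : forall v, exists u, spl (map w' (index_enum 'I_m)) (v - f u).
  move=> v; have [c [b [[x _ fx] ->]]] := Hw' v I.
  by exists x; rewrite -fx addrC addKr; apply: spl_sum.
split; first by move=> p; exact: (fin_p Tl fl fc Hk Hq Hg p).
by exists n.+1 => p hp; apply: vanish.
Qed.
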